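(* The quotient $\mathbb F$-vector space $\Re/I_\nu(a,b,c)$ is spanned by the cosets $A^i+I_\nu(a,b,c)$, $i\in\mathbb N$.
   Context: $\mathbb F$ is algebraically closed with $\operatorname{char}\mathbb F\ne2$. The Racah algebra $\Re$ is the unital associative $\mathbb F$-algebra with generators $A,B,C,D$ and relations $[A,B]=[B,C]=[C,A]=2D$ together with the requirement that each of $\alpha:=[A,D]+AC-BA$, $\beta:=[B,D]+BA-CB$, $\gamma:=[C,D]+CB-AC$ is central in $\Re$; $\delta:=A+B+C$. For $a,b,c,\nu\in\mathbb F$ and $i\in\mathbb Z$: $\theta_i=(a+\tfrac\nu2-i)(a+\tfrac\nu2-i+1)$, $\theta_i^*=(b+\tfrac\nu2-i)(b+\tfrac\nu2-i+1)$, $\varphi_i=i(i-\nu-1)(a+b+c+\tfrac\nu2-i+2)(a+b-c+\tfrac\nu2-i+1)$, $\zeta=(c-b)(c+b+1)(a-\tfrac\nu2)(a+\tfrac\nu2+1)$, $\zeta^*=(a-c)(a+c+1)(b-\tfrac\nu2)(b+\tfrac\nu2+1)$, $\eta=\tfrac\nu2(\tfrac\nu2+1)+a(a+1)+b(b+1)+c(c+1)$. $I_\nu(a,b,c)$ is the left ideal of $\Re$ generated by $B-\theta_0^*$, $(B-\theta_1^* )(A-\theta_0)-\varphi_1$, $\alpha-\zeta$, $\beta-\zeta^*$, $\delta-\eta$. *)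

(* Defs.v *)
(* The Racah algebra is built concretely as the free unital
   associative F-algebra on A,B,C,D (syntactic terms modulo the congruence
   generated by the F-algebra axioms) further quotiented by the defining
   relations.  Elements of Re are represented by terms; equality in Re is
   [req]. *)
From HB Require Import structures.
From mathcomp Require Import all_boot all_order all_algebra.
Set Implicit Arguments. Unset Strict Implicit. Unset Printing Implicit Defensive.
Import Order.TTheory GRing.Theory Num.Theory.
Local Open Scope ring_scope.

Inductive gen := gA | gB | gC | gD.

Section Racah.
Variable F : fieldType.

Inductive term :=
| Gen of gen
| Cst of F
| Add of term & term
| Mul of term & term.

Definition tA := Gen gA.
Definition tB := Gen gB.
Definition tC := Gen gC.
Definition tD := Gen gD.
Definition TOpp (x : term) := Mul (Cst (-1)) x.
Definition TSub (x y : term) := Add x (TOpp y).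
Definition TComm (x y : term) := TSub (Mul x y) (Mul y x).

Definition alpha := Add (TComm tA tD) (TSub (Mul tA tC) (Mul tB tA)).
Definition beta  := Add (TComm tB tD) (TSub (Mul tB tA) (Mul tC tB)).
Definition gamma := Add (TComm tC tD) (TSub (Mul tC tB) (Mul tA tC)).
Definition delta := Add (Add tA tB) tC.

Inductive req : term -> term -> Prop :=
| req_refl x : req x x
| req_sym x y : req x y -> req y x
| req_trans x y z : req x y -> req y z -> req x z
| req_add x x' y y' : req x x' -> req y y' -> req (Add x y) (Add x' y')
| req_mul x x' y y' : req x x' -> req y y' -> req (Mul x y) (Mul x' y')
| req_addA x y z : req (Add x (Add y z)) (Add (Add x y) z)
| req_addC x y : req (Add x y) (Add y x)
| req_add0 x : req (Add (Cst 0) x) x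
| req_addN x : req (Add x (TOpp x)) (Cst 0)
| req_mulA x y z : req (Mul x (Mul y z)) (Mul (Mul x y) z)
| req_mul1l x : req (Mul (Cst 1) x) x
| req_mul1r x : req (Mul x (Cst 1)) x
| req_mulDl x y z : req (Mul (Add x y) z) (Add (Mul x z) (Mul y z))
| req_mulDr x y z : req (Mul x (Add y z)) (Add (Mul x y) (Mul x z))
(* F -> Re is a ring morphism into the center (F-algebra structure) *)
| req_cstD a b : req (Cst (a + b)) (Add (Cst a) (Cst b))
| req_cstM a b : req (Cst (a * b)) (Mul (Cst a) (Cst b))
| req_cstC a x : req (Mul (Cst a) x) (Mul x (Cst a))
| req_AB : req (TComm tA tB) (Mul (Cst 2) tD)
| req_BC : req (TComm tB tC) (Mul (Cst 2) tD)
| req_CA : req (TComm tC tA) (Mul (Cst 2) tD)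
| req_alpha x : req (Mul alpha x) (Mul x alpha)
| req_beta x : req (Mul beta x) (Mul x beta)
| req_gamma x : req (Mul gamma x) (Mul x gamma).

Variables a b c nu : F.
Definition nu2 := nu / 2.
Definition theta (i : nat) := (a + nu2 - i%:R) * (a + nu2 - i%:R + 1).
Definition thetas (i : nat) := (b + nu2 - i%:R) * (b + nu2 - i%:R + 1).
Definition phi (i : nat) :=
  i%:R * (i%:R - nu - 1) * (a + b + c + nu2 - i%:R + 2) * (a + b - c + nu2 - i%:R + 1).
Definition zeta := (c - b) * (c + b + 1) * (a - nu2) * (a + nu2 + 1).
Definition zetas := (a - c) * (a + c + 1) * (b - nu2) * (b + nu2 + 1).
Definition eta := nu2 * (nu2 + 1) + a * (a + 1) + b * (b + 1) + c * (c + 1).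

(* membership in the left ideal I_nu(a,b,c) of Re (on representatives) *)
Inductive inI : term -> Prop :=
| inI_g1 : inI (TSub tB (Cst (thetas 0)))
| inI_g2 : inI (TSub (Mul (TSub tB (Cst (thetas 1))) (TSub tA (Cst (theta 0)))) (Cst (phi 1)))
| inI_g3 : inI (TSub alpha (Cst zeta))
| inI_g4 : inI (TSub beta (Cst zetas))
| inI_g5 : inI (TSub delta (Cst eta))
| inI_0 : inI (Cst 0)
| inI_add x y : inI x -> inI y -> inI (Add x y)
| inI_lmul r x : inI x -> inI (Mul r x)
| inI_req x y : req x y -> inI x -> inI y.

End Racah.

Fixpoint tpow (F : fieldType) (x : term F) (n : nat) : term F :=
  if n is n'.+1 then Mul x (tpow x n') else Cst 1.

Fixpoint linA (F : fieldType) (s : seq F) (i : nat) : term F :=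
  if s is c :: s' then Add (Mul (Cst c) (tpow (tA F) i)) (linA s' i.+1)
  else Cst 0.

(* Main.v *)
Require Import Defs.
From HB Require Import structures.
From mathcomp Require Import all_boot all_order all_algebra.
From mathcomp Require Import boolp.
Set Implicit Arguments. Unset Strict Implicit. Unset Printing Implicit Defensive.
Import GRing.Theory.
Local Open Scope ring_scope.

Section Q.
Variable F : fieldType.
Notation term := (term F).

Definition RR := {P : term -> Prop | exists x, P = req x}.
Definition qq (x : term) : RR := exist _ (req x) (ex_intro _ x erefl).
Definition rep (r : RR) : term := proj1_sig (cid (proj2_sig r)).

Lemma qq_rep r : qq (rep r) = r.
Proof.
case: r => P hP; rewrite /rep /=; case: (cid hP) => x /= hx.
by apply: eq_exist; rewrite hx.
Qed.
Lemma qq_eq x y : req x y -> qq x = qq y.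
Proof.
move=> h; apply: eq_exist; apply: funext => z; apply: propext; split => hz.
- exact: req_trans (req_sym h) hz.
- exact: req_trans h hz.
Qed.
Lemma qq_inj x y : qq x = qq y -> req x y.
Proof.
move=> /(congr1 (@proj1_sig _ _)) /= h.
have : req y y := req_refl y. by rewrite -h.
Qed.
Lemma rep_req x : req (rep (qq x)) x.
Proof. apply: qq_inj; by rewrite qq_rep. Qed.

Definition rzero := qq (Cst 0).
Definition rone := qq (Cst 1).
Definition radd r s := qq (Add (rep r) (rep s)).
Definition rmul r s := qq (Mul (rep r) (rep s)).
Definition ropp r := qq (TOpp (rep r)).

Lemma raddE x y : radd (qq x) (qq y) = qq (Add x y).
Proof. by apply: qq_eq; apply: req_add; apply: rep_req. Qed.
Lemma rmulE x y : rmul (qq x) (qq y) = qq (Mul x y).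
Proof. by apply: qq_eq; apply: req_mul; apply: rep_req. Qed.
Lemma roppE x : ropp (qq x) = qq (TOpp x).
Proof. by apply: qq_eq; apply: req_mul; [apply: req_refl|apply: rep_req]. Qed.

Ltac elim1 := let r := fresh "r" in move=> r; rewrite -(qq_rep r); move: (rep r) => {r}.
Ltac elimq := first [ elim1; let x := fresh "x" in move=> x; elimq; move: x | idtac ].

Lemma raddA : associative radd.
Proof. by elimq => x y z; rewrite !raddE; apply: qq_eq; apply: req_addA. Qed.
Lemma raddC : commutative radd.
Proof. by elimq => x y; rewrite !raddE; apply: qq_eq; apply: req_addC. Qed.
Lemma radd0 : left_id rzero radd.
Proof. by elimq => x; rewrite raddE; apply: qq_eq; apply: req_add0. Qed.
Lemma raddN : left_inverse rzero ropp radd.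
Proof.
by elimq => x; rewrite roppE raddE; apply: qq_eq; apply: req_trans (req_addC _ _) (req_addN _).
Qed.
Lemma rmulA : associative rmul.
Proof. by elimq => x y z; rewrite !rmulE; apply: qq_eq; apply: req_mulA. Qed.
Lemma rmul1l : left_id rone rmul.
Proof. by elimq => x; rewrite rmulE; apply: qq_eq; apply: req_mul1l. Qed.
Lemma rmul1r : right_id rone rmul.
Proof. by elimq => x; rewrite rmulE; apply: qq_eq; apply: req_mul1r. Qed.
Lemma rmulDl : left_distributive rmul radd.
Proof. by elimq => x y z; rewrite !(rmulE, raddE); apply: qq_eq; apply: req_mulDl. Qed.
Lemma rmulDr : right_distributive rmul radd.
Proof. by elimq => x y z; rewrite !(rmulE, raddE); apply: qq_eq; apply: req_mulDr. Qed.

HB.instance Definition _ := gen_eqMixin RR.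
HB.instance Definition _ := gen_choiceMixin RR.
HB.instance Definition _ := GRing.isZmodule.Build RR raddA raddC radd0 raddN.
HB.instance Definition _ := GRing.Zmodule_isPzRing.Build RR rmulA rmul1l rmul1r rmulDl rmulDr.

Lemma qAdd x y : qq (Add x y) = qq x + qq y. Proof. by rewrite -raddE. Qed.
Lemma qMul x y : qq (Mul x y) = qq x * qq y. Proof. by rewrite -rmulE. Qed.
Lemma qOpp x : qq (TOpp x) = - qq x. Proof. by rewrite -roppE. Qed.
Lemma qSub x y : qq (TSub x y) = qq x - qq y. Proof. by rewrite /TSub qAdd qOpp. Qed.
Lemma q0 : qq (Cst 0) = 0. Proof. by []. Qed.
Lemma q1 : qq (Cst 1) = 1. Proof. by []. Qed.
Lemma t1 (V : zmodType) (p q r s : V) : p - q - (q - r) = s -> r = s - p + q *+ 2.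
Proof. move<-. by rewrite mulr2n opprB (addrC p) -!addrA (addrCA p r) (addrCA (-q) r) (addrCA p (-q)) addNKr addKr addNr addr0. Qed.
Lemma t2 (V : zmodType) (x y z d : V) : x + (y + d) + (z - d) = x + y + z.
Proof. by rewrite -!addrA (addrCA d) subrr addr0. Qed.
Lemma t3 (V : zmodType) (a b c : V) : c = a + b + c - a - b.
Proof. by rewrite -!addrA (addrCA b c) (addrCA a c) (addrCA b (-a)) addNKr subrr addr0. Qed.
Lemma t4 (K : fieldType) (h : ~~ (2 \in [pchar K])) : (2:K) != 0.
Proof. by apply: contra h => h; rewrite inE /=. Qed.

Variables a b c nu : F.
Notation R := RR.
Definition kk (x : F) : R := qq (Cst x).
Definition A : R := qq (tA F).
Definition B : R := qq (tB F).
Definition C : R := qq (tC F).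
Definition D : R := qq (tD F).

Lemma kD x y : kk (x + y) = kk x + kk y.
Proof. by rewrite /kk -qAdd; apply: qq_eq; apply: req_cstD. Qed.
Lemma kM x y : kk (x * y) = kk x * kk y.
Proof. by rewrite /kk -qMul; apply: qq_eq; apply: req_cstM. Qed.
Lemma kC x r : kk x * r = r * kk x.
Proof. rewrite -(qq_rep r) /kk -!qMul; apply: qq_eq; apply: req_cstC. Qed.
Lemma k0 : kk 0 = 0. Proof. by []. Qed.
Lemma k1 : kk 1 = 1. Proof. by []. Qed.
Lemma kN x : kk (- x) = - kk x.
Proof. by apply/eqP; rewrite -subr_eq0 opprK -kD addNr. Qed.
Lemma k2 : kk 2 = 2.
Proof. by rewrite -[2]/(1 *+ 2) mulr2n kD k1. Qed.

Definition J (r : R) := exists x, r = qq x /\ inI a b c nu x.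
Lemma J0 : J 0. Proof. by exists (Cst 0); split => //; apply: inI_0. Qed.
Lemma JD x y : J x -> J y -> J (x + y).
Proof. by move=> [u [-> hu]] [v [-> hv]]; exists (Add u v); rewrite qAdd; split => //; apply: inI_add. Qed.
Lemma JM r x : J x -> J (r * x).
Proof. move=> [u [-> hu]]; exists (Mul (rep r) u); rewrite qMul qq_rep; split => //; exact: inI_lmul. Qed.
Lemma JN x : J x -> J (- x).
Proof. by move=> h; rewrite -mulN1r; apply: JM. Qed.
Lemma JB x y : J x -> J y -> J (x - y).
Proof. by move=> hx hy; apply: JD => //; apply: JN. Qed.
Lemma Jq x : inI a b c nu x -> J (qq x).
Proof. by move=> h; exists x. Qed.
Lemma qJ x : J (qq x) -> inI a b c nu x.
Proof. move=> [u [/qq_inj h hu]]; exact: inI_req (req_sym h) hu. Qed.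

Inductive Sp : R -> Prop :=
| Sp_pow i : Sp (A ^+ i)
| Sp_add p q : Sp p -> Sp q -> Sp (p + q)
| Sp_scal x p : Sp p -> Sp (kk x * p).

Definition W (x : R) := exists p, Sp p /\ J (x - p).

Lemma WJ x y : J (x - y) -> W y -> W x.
Proof.
move=> h [p [hp hj]]; exists p; split => //.
by rewrite -(subrK y x) -addrA; apply: JD.
Qed.
Lemma WD x y : W x -> W y -> W (x + y).
Proof.
move=> [p [hp hj]] [q [hq hk]]; exists (p + q); split; first exact: Sp_add.
by rewrite opprD addrACA; apply: JD.
Qed.
Lemma WK k x : W x -> W (kk k * x).
Proof.
move=> [p [hp hj]]; exists (kk k * p); split; first exact: Sp_scal.
by rewrite -mulrBr; apply: JM.
Qed.
Lemma WN x : W x -> W (- x).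
Proof. by move=> h; rewrite -mulN1r -k1 -kN; apply: WK. Qed.
Lemma WB x y : W x -> W y -> W (x - y).
Proof. by move=> hx hy; apply: WD => //; apply: WN. Qed.
Lemma Wn x n : W x -> W (x *+ n).
Proof.
move=> h; elim: n => [|n IH]; last by rewrite mulrS; apply: WD.
rewrite mulr0n; exists (kk 0 * A ^+ 0); split; first by apply: Sp_scal; apply: Sp_pow.
by rewrite k0 mul0r subrr; apply: J0.
Qed.
Lemma Wpow i : W (A ^+ i).
Proof. by exists (A ^+ i); split; [apply: Sp_pow | rewrite subrr; apply: J0]. Qed.
Lemma Wk x : W (kk x).
Proof. by rewrite -[kk x]mulr1 -(expr0 A); apply: WK; apply: Wpow. Qed.
Lemma WinJ x : J x -> W x.
Proof. by move=> h; apply: (@WJ x 0); [rewrite subr0 | have := Wn 0 (Wpow 0); rewrite mulr0n]. Qed.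
Lemma WsubK x y : W (x - y) -> W y -> W x.
Proof. by move=> h1 h2; rewrite -(subrK y x); apply: WD. Qed.

Lemma SpA p : Sp p -> Sp (A * p).
Proof.
elim => [i|p1 q _ hp _ hq|x p1 _ hp].
- by rewrite -exprS; apply: Sp_pow.
- by rewrite mulrDr; apply: Sp_add.
- by rewrite mulrA -kC -mulrA; apply: Sp_scal.
Qed.
Lemma WA x : W x -> W (A * x).
Proof.
move=> [p [hp hj]]; exists (A * p); split; first exact: SpA.
by rewrite -mulrBr; apply: JM.
Qed.
Lemma Wlift g : (forall i, W (g * A ^+ i)) -> forall x, W x -> W (g * x).
Proof.
move=> hg x [p [hp hj]]; apply: (@WJ _ (g * p)); first by rewrite -mulrBr; apply: JM.
elim: hp {hj} => [i|p1 q _ hp _ hq|k p1 _ hp]; first exact: hg.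
- by rewrite mulrDr; apply: WD.
- by rewrite mulrA -kC -mulrA; apply: WK.
Qed.

Lemma hAB : A * B - B * A = D *+ 2.
Proof.
have := qq_eq (req_AB F); rewrite /TComm !qSub !qMul => ->.
by rewrite (_ : qq (Cst 2) = kk 2) // k2 mulr_natl.
Qed.
Lemma hCA : C * A - A * C = D *+ 2.
Proof.
have := qq_eq (req_CA F); rewrite /TComm !qSub !qMul => ->.
by rewrite (_ : qq (Cst 2) = kk 2) // k2 mulr_natl.
Qed.

Definition al : R := (A * D - D * A) + (A * C - B * A).
Definition de : R := A + B + C.
Lemma qal : qq (alpha F) = al.
Proof. by rewrite /alpha qAdd /TComm !qSub !qMul. Qed.
Lemma qde : qq (delta F) = de.
Proof. by rewrite /delta !qAdd. Qed.
Lemma alC r : al * r = r * al.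
Proof. by rewrite -(qq_rep r) -qal -!qMul; apply: qq_eq; apply: req_alpha. Qed.

Lemma deA : A * de = de * A.
Proof.
rewrite /de !mulrDl !mulrDr.
have -> : A * B = B * A + D *+ 2 by rewrite -hAB addrCA subrr addr0.
have -> : A * C = C * A - D *+ 2 by rewrite -hCA opprB addrCA subrr addr0.
exact: t2.
Qed.

Lemma J_g1 : J (B - kk (thetas b nu 0)).
Proof. by have := Jq (inI_g1 a b c nu); rewrite qSub. Qed.
Lemma J_g2 : J ((B - kk (thetas b nu 1)) * (A - kk (theta a nu 0)) - kk (phi a b c nu 1)).
Proof. by have := Jq (inI_g2 a b c nu); rewrite !qSub qMul !qSub. Qed.
Lemma J_g3 : J (al - kk (zeta a b c nu)).
Proof. by have := Jq (inI_g3 a b c nu); rewrite qSub qal. Qed.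
Lemma J_g5 : J (de - kk (Defs.eta a b c nu)).
Proof. by have := Jq (inI_g5 a b c nu); rewrite qSub qde. Qed.

Lemma Wal y : W y -> W (al * y).
Proof.
move=> hy; apply: (@WJ _ (kk (zeta a b c nu) * y)); last exact: WK.
by rewrite alC kC -mulrBr; apply: JM; apply: J_g3.
Qed.
Lemma Wde i : W (de * A ^+ i).
Proof.
have hc : GRing.comm de (A ^+ i) by apply: commrX; rewrite /GRing.comm deA.
apply: (@WJ _ (kk (Defs.eta a b c nu) * A ^+ i)); last by apply: WK; apply: Wpow.
by rewrite hc kC -mulrBr; apply: JM; apply: J_g5.
Qed.

Lemma keyRel : B * A * A =
  (al - (de * A - A * A - A * B - B * A)) *+ 2 - A * A * B + (A * B * A) *+ 2.
Proof.
apply: t1.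
have E0 : A * (A * B - B * A) - (A * B - B * A) * A = (A * D - D * A) *+ 2.
  by rewrite hAB mulrnAr mulrnAl -mulrnBl.
have E1 : A * D - D * A = al - (A * C - B * A) by rewrite /al addrK.
have E2 : A * C = de * A - A * A - A * B.
  by rewrite -deA -!mulrBr /de -t3.
rewrite -E2 -E1 -E0 !mulrBr !mulrBl !mulrA.
by [].
Qed.

Lemma WB0 : W B.
Proof. by apply: (@WJ _ (kk (thetas b nu 0))); [apply: J_g1 | apply: Wk]. Qed.
Lemma WB1 : W (B * A).
Proof.
have := WinJ J_g2; rewrite mulrBr !mulrBl => h.
have h1 := WsubK h (Wk _).
have h2 : W (B * kk (theta a nu 0) - kk (thetas b nu 1) * kk (theta a nu 0)).
  by apply: WB; [rewrite -kC; apply: WK; apply: WB0 | rewrite -kM; apply: Wk].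
have h3 := WsubK h1 h2.
apply: (WsubK h3); apply: WK; rewrite -[A]expr1; apply: Wpow.
Qed.

Lemma WBpow i : W (B * A ^+ i) /\ W (B * A ^+ i.+1).
Proof.
elim: i => [|i [IH1 IH2]]; first by rewrite expr0 mulr1 expr1; split; [apply: WB0|apply: WB1].
split => //.
set y := A ^+ i.
have -> : B * A ^+ i.+2 = B * A * A * y by rewrite !exprS !mulrA.
have hal : W (al * y) by apply: Wal; apply: Wpow.
have hde : W (de * (A * y)) by rewrite /y -exprS; apply: Wde.
rewrite keyRel; move: (al) (de) hal hde => al0 de0 hal hde.
rewrite !(mulrBl, mulrDl, mulNr, mulrnAl) -!mulrA.
have hBy : W (B * y) by [].
have hBAy : W (B * (A * y)) by rewrite /y -exprS.
have hy : W y by apply: Wpow.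
repeat first [apply: WB | apply: WD | apply: Wn | apply: WA | assumption].
Qed.

Lemma WBg x : W x -> W (B * x).
Proof. by apply: Wlift => i; case: (WBpow i). Qed.
Lemma WAg x : W x -> W (A * x).
Proof. exact: WA. Qed.
Lemma WCg x : W x -> W (C * x).
Proof.
move=> hx; have -> : C = de - A - B by rewrite /de -t3.
by rewrite !mulrBl; apply: WB; [apply: WB; [apply: Wlift hx => i; apply: Wde|apply: WA]|apply: WBg].
Qed.
Hypothesis h2 : (2 : F) != 0.
Lemma WDg x : W x -> W (D * x).
Proof.
move=> hx; have -> : D = kk (2^-1) * (A * B - B * A).
  by rewrite hAB -[D *+ 2]mulr_natl -k2 mulrA -kM mulVf // k1 mul1r.
by rewrite -mulrA mulrBl -!mulrA; apply: WK; apply: WB; [apply: WA; apply: WBg | apply: WBg; apply: WA].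
Qed.

Lemma Wterm t : forall y, W y -> W (qq t * y).
Proof.
elim: t => [g|k|t1 IH1 t2 IH2|t1 IH1 t2 IH2] y hy.
- by case: g; [exact: WAg | exact: WBg | exact: WCg | exact: WDg].
- exact: WK.
- by rewrite qAdd mulrDl; apply: WD; [apply: IH1|apply: IH2].
- by rewrite qMul -mulrA; apply: IH1; apply: IH2.
Qed.

Lemma qtpow j : qq (tpow (tA F) j) = A ^+ j.
Proof. by elim: j => [|j IH] //=; rewrite qMul IH -exprS. Qed.

Fixpoint addseq (s t : seq F) := match s, t with
  | x :: s', y :: t' => (x + y) :: addseq s' t'
  | [::], _ => t
  | _, [::] => s end.

Lemma qadd s t j : qq (linA (addseq s t) j) = qq (linA s j) + qq (linA t j).
Proof.
elim: s t j => [|x s IH] [|y t] j /=.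
- by rewrite q0 addr0.
- by rewrite q0 add0r.
- by rewrite q0 addr0.
- rewrite !qAdd IH qMul !qMul !qtpow -/(kk (x + y)) kD mulrDl.
  by rewrite -/(kk x) -/(kk y) addrACA.
Qed.

Lemma qscal k s j : qq (linA (map (fun x => k * x) s) j) = kk k * qq (linA s j).
Proof.
elim: s j => [|x s IH] j /=; first by rewrite q0 mulr0.
by rewrite !qAdd IH !qMul -/(kk (k * x)) -/(kk x) kM mulrDr mulrA.
Qed.

Lemma qpow i j : qq (linA (nseq i 0 ++ [:: 1]) j) = A ^+ (i + j).
Proof.
elim: i j => [|i IH] j /=.
- by rewrite qAdd qMul qtpow q1 q0 mul1r addr0.
- by rewrite qAdd qMul IH q0 mul0r add0r addSnnS.
Qed.

Lemma Sp_lin p : Sp p -> exists s, p = qq (linA s 0).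
Proof.
elim => [i|p1 q _ [s ->] _ [t ->]|k p1 _ [s ->]].
- by exists (nseq i 0 ++ [:: 1]); rewrite qpow addn0.
- by exists (addseq s t); rewrite qadd.
- by exists (map (fun x => k * x) s); rewrite qscal.
Qed.

Lemma main x : exists s, inI a b c nu (TSub x (linA s 0)).
Proof.
have : W (qq x * 1) by apply: Wterm; rewrite -(expr0 A); apply: Wpow.
rewrite mulr1 => -[p [hp hj]].
have [s hs] := Sp_lin hp.
by exists s; apply: qJ; rewrite qSub -hs.
Qed.
End Q.

Theorem lemma3p5 (F : closedFieldType) (hchar : ~~ (2 \in [pchar F]))
  (a b c nu : F) (x : term F) :
  exists s : seq F, inI a b c nu (TSub x (linA s 0)).
Proof. exact: (main a b c nu (t4 hchar) x). Qed.
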